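(* Let $G=G_1\times G_2$ be a direct product of finite groups, let $A$ be a finite group on which $G_1$ acts from the right by automorphisms, and let $I=\mathrm{Ind}_{G_1}^G(A)$, where $G_1$ is identified with $G_1\times\{1\}\leq G$. Assume $|G_2|\geq|A|$. Then there exists $\zeta\in I$ such that for every $g_1\in G_1$, the normal subgroup $N$ of $A\wr_{G_1}G$ generated by $\tau=(\zeta,(g_1,1))$ satisfies $\pi(N\cap I)=A$.
   Context: For finite groups $G_1\leq G$ and a finite group $A$ with a right action of $G_1$, $\mathrm{Ind}_{G_1}^G(A)=\{f:G\to A \mid f(\sigma\tau)=f(\sigma)^\tau\ \forall\sigma\in G,\ \forall\tau\in G_1\}$, a group under pointwise multiplication. $G$ acts on it from the right by $f^\sigma(\tau)=f(\sigma\tau)$. The twisted wreath product is the semidirect product $A\wr_{G_1}G=\mathrm{Ind}_{G_1}^G(A)\rtimes G$. The map $\pi:\mathrm{Ind}_{G_1}^G(A)\to A$ is $\pi(f)=f(1)$. *)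

(* Defs.v *)
From HB Require Import structures.
From mathcomp Require Import all_boot all_fingroup.
Set Implicit Arguments.
Unset Strict Implicit.
Unset Printing Implicit Defensive.
Import GroupScope.
Local Open Scope group_scope.

Section TwistedWreath.
Variables gT1 gT2 aT : finGroupType.

Notation GT := (gT1 * gT2)%type.

Definition FunG : finGroupType := {dffun forall _ : GT, aT}.

Definition shift (f : FunG) (s : GT) : FunG := finfun (fun t : GT => f (s * t)).

Lemma shift1 : shift^~ 1 =1 id.
Proof. by move=> f; apply/ffunP=> t; rewrite ffunE mul1g. Qed.

Lemma shiftM : forall f, act_morph shift f.
Proof. by move=> f a b; apply/ffunP=> t; rewrite !ffunE mulgA. Qed.

Definition shift_action := TotalAction shift1 shiftM.

Lemma shift_is_groupAction :
  is_groupAction [set: FunG] (shift_action : action [set: GT] FunG).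
Proof.
move=> s _; rewrite inE; apply/andP; split.
  by apply/subsetP=> x; rewrite inE.
apply/morphicP=> f g _ _; rewrite !actpermE /=.
by apply/ffunP=> t; rewrite !ffunE.
Qed.

Definition shift_gaction := GroupAction shift_is_groupAction.

(* The ambient group A^G ⋊ G; its element (s, f) stands for s * f. *)
Definition SD : finGroupType := sdprod_by shift_gaction.

Variable to : {action gT1 &-> aT}.

Definition Ind : {set FunG} :=
  [set f : FunG | [forall s : GT, forall t : gT1, f (s * pairg1 gT2 t) == to (f s) t]].

(* The copy of Ind inside SD, the copy of G, and the twisted wreath
   product  A wr_{G1} G = Ind ⋊ G  as a subgroup of SD. *)
Definition IndS : {set SD} := sdpair1 shift_gaction @* Ind.
Definition GS : {set SD} := sdpair2 shift_gaction @* [set: GT].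
Definition Wr : {set SD} := IndS <*> GS.

Definition piInd (f : FunG) : aT := f 1.

End TwistedWreath.

(* Main.v *)
Require Import Defs.
From HB Require Import structures.
From mathcomp Require Import all_boot all_fingroup.
Import GroupScope.
Local Open Scope group_scope.

Section Aux.
Variables (gT1 gT2 aT : finGroupType) (to : {action gT1 &-> aT}).
Hypothesis to_aut : forall g : gT1, {morph to^~ g : x y / x * y}.

Definition zf (d : gT2 -> aT) : FunG gT1 gT2 aT :=
  [ffun x : (gT1 * gT2)%type => to (d x.2) x.1].

Lemma zf_Ind d : zf d \in @Ind gT1 gT2 aT to.
Proof.
rewrite inE; apply/forallP => -[x1 x2]; apply/forallP => t.
by rewrite !ffunE /= mulg1 actM.
Qed.

Lemma to1 t : to 1 t = 1.
Proof.
have H := to_aut t 1 1; rewrite mulg1 in H.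
by apply: (mulgI (to 1 t)); rewrite mulg1 -H.
Qed.

Lemma toV a t : to a^-1 t = (to a t)^-1.
Proof.
apply/eqP; rewrite eq_sym eq_invg_mul -to_aut mulgV; apply/eqP; exact: to1.
Qed.

End Aux.

Theorem lemma4p1 (gT1 gT2 aT : finGroupType) (to : {action gT1 &-> aT})
  (to_aut : forall g : gT1, {morph to^~ g : x y / x * y})
  (hcard : #|aT| <= #|gT2|) :
  exists2 zeta : FunG gT1 gT2 aT, zeta \in @Ind gT1 gT2 aT to &
    forall g1 : gT1,
      let tau : SD gT1 gT2 aT :=
        sdpair1 (shift_gaction gT1 gT2 aT) zeta *
        sdpair2 (shift_gaction gT1 gT2 aT) (g1, 1) in
      let N := <<tau ^: @Wr gT1 gT2 aT to>> in
      @piInd gT1 gT2 aT @: (sdpair1 (shift_gaction gT1 gT2 aT) @*^-1 (N :&: @IndS gT1 gT2 aT to)) = [set: aT].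
Proof.
pose c (x2 : gT2) : aT := nth 1 (enum aT) (enum_rank x2).
have csurj : forall a : aT, exists h2, c h2 = a.
  move=> a; have ia : index a (enum aT) < #|gT2|.
    by apply: leq_trans hcard; rewrite cardE index_mem mem_enum.
  exists (enum_val (Ordinal ia)); rewrite /c enum_valK /=.
  by rewrite nth_index // mem_enum.
pose Z := @zf gT1 gT2 aT to.
exists (Z c); first exact: (@zf_Ind gT1 gT2 aT).
move=> g1 tau N.
apply/eqP; rewrite eqEsubset subsetT /=; apply/subsetP => a _.
set sg := shift_gaction gT1 gT2 aT.
have [h2 ch2] := csurj (a * c 1).
pose h : (gT1 * gT2)%type := (1, h2).
pose d (x2 : gT2) := c (h2 * x2) * (c x2)^-1.
have key : sdpair1 sg (Z d) = tau ^ sdpair2 sg h * tau^-1.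
  have gh : ((g1, 1) : (gT1 * gT2)%type) ^ h = (g1, 1).
    by rewrite /conjg /h; apply/eqP; rewrite xpair_eqE /= invg1 !mul1g mulg1 mulVg !eqxx.
  rewrite /tau conjMg -sdpair_act ?inE // -morphJ ?inE // gh.
  rewrite invMg mulgA mulgK -morphV ?inE // -morphM ?inE //.
  congr (sdpair1 _ _); apply/ffunP => -[x1 x2].
  rewrite !ffunE /=.
  by rewrite mul1g /d to_aut (@toV gT1 aT to to_aut).
apply/imsetP; exists (Z d).
  rewrite mem_morphpre ?inE //; apply/andP; split.
    change (sdpair1 sg (Z d) \in N); rewrite key /N.
    apply: groupM.
      apply: mem_gen; apply: memJ_class; apply: mem_gen; apply/setUP; right.
      by apply: mem_morphim; rewrite inE.
    by rewrite groupV; apply: mem_gen; exact: class_refl.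
  rewrite /IndS.
  by apply: mem_morphim; [rewrite inE | exact: (@zf_Ind gT1 gT2 aT)].
rewrite /piInd ffunE /= act1 /d mulg1 ch2 mulgK //.
Qed.
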